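(* Under the standing assumptions below, let $e,f\in S_1$ with $ef=f$. Then $\|\theta(e)-\theta(f)\|_{HS}\le5\delta$.
   Context: Standing assumptions: $S$ is a semilattice (commutative semigroup of idempotents), $0\le\delta<0.03$, and $\theta:S\to M_2(\mathbb C)$ satisfies $\|\theta(e)\theta(f)-\theta(ef)\|_{HS}\le\delta$ for all $e,f\in S$, where $\|A\|_{HS}=(\operatorname{tr}(A^*A))^{1/2}$. For $k\in\{0,1,2\}$, $S_k=\{x\in S:\ |\operatorname{tr}\theta(x)-k|<0.95\}$; these sets are pairwise disjoint and cover $S$. *)

(* Defs.v *)
From HB Require Import structures.
From mathcomp Require Import all_boot all_order all_algebra.
Set Implicit Arguments. Unset Strict Implicit. Unset Printing Implicit Defensive.
Import Order.TTheory GRing.Theory Num.Theory.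
Local Open Scope ring_scope.

Definition conjT (C : numClosedFieldType) (n : nat) (A : 'M[C]_n) : 'M[C]_n :=
  (map_mx Num.conj A)^T.

Definition hs_norm (C : numClosedFieldType) (n : nat) (A : 'M[C]_n) : C :=
  sqrtC (\tr (conjT A *m A)).

Definition is_semilattice (S : Type) (op : S -> S -> S) : Prop :=
  (forall x y z, op x (op y z) = op (op x y) z) /\
  (forall x y, op x y = op y x) /\
  (forall x, op x x = x).

Definition in_Sk (C : numClosedFieldType) (S : Type) (theta : S -> 'M[C]_2)
  (k : nat) (x : S) : bool :=
  `|\tr (theta x) - k%:R| < 95%:R / 100%:R.

(* Main.v *)
Require Import Defs.
From HB Require Import structures.
From mathcomp Require Import all_boot all_order all_algebra.
From mathcomp Require Import ring lra.
Import Order.TTheory GRing.Theory Num.Theory.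
Local Open Scope ring_scope.
Set Warnings "-notation-overridden,-ambiguous-paths".

Section RealSub.
Variable C : numClosedFieldType.
Definition RS := {x : C | x \is Num.real}.
HB.instance Definition _ := [isSub for (@proj1_sig C _ : RS -> C)].
HB.instance Definition _ := [Choice of RS by <:].
HB.instance Definition _ := [SubChoice_isSubComUnitRing of RS by <:].
HB.instance Definition _ := [SubComUnitRing_isSubIntegralDomain of RS by <:].
HB.instance Definition _ := [SubIntegralDomain_isSubField of RS by <:].
Definition RSle (x y : RS) := (val x <= val y).
Definition RSlt (x y : RS) := (val x < val y).
Lemma RSnorm_real (x : RS) : `|val x| \is Num.real. Proof. exact: normr_real. Qed.
Definition RSnorm (x : RS) : RS := exist (fun z => z \is Num.real) _ (RSnorm_real x).
Lemma RS_le0_add (x y : RS) : RSle 0 x -> RSle 0 y -> RSle 0 (x + y).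
Proof. rewrite /RSle rmorphD rmorph0; exact: addr_ge0. Qed.
Lemma RS_le0_mul (x y : RS) : RSle 0 x -> RSle 0 y -> RSle 0 (x * y).
Proof. rewrite /RSle rmorphM rmorph0; exact: mulr_ge0. Qed.
Lemma RS_le0_anti (x : RS) : RSle 0 x -> RSle x 0 -> x = 0.
Proof. rewrite /RSle rmorph0 => h1 h2; apply: val_inj; rewrite rmorph0; apply/eqP; rewrite eq_le h1 h2 //. Qed.
Lemma RS_sub_ge0 (x y : RS) : RSle 0 (y - x) = RSle x y.
Proof. by rewrite /RSle rmorphB rmorph0 subr_ge0. Qed.
Lemma RS_le0_total (x : RS) : RSle 0 x || RSle x 0.
Proof. rewrite /RSle rmorph0; case: x => /= x hx; by apply: real_leVge; rewrite ?real0. Qed.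
Lemma RS_normN (x : RS) : RSnorm (- x) = RSnorm x.
Proof. apply: val_inj => /=; exact: normrN. Qed.
Lemma RS_ge0_norm (x : RS) : RSle 0 x -> RSnorm x = x.
Proof. rewrite /RSle rmorph0 => h; apply: val_inj => /=; exact: ger0_norm. Qed.
Lemma RS_lt_def (x y : RS) : RSlt x y = (y != x) && RSle x y.
Proof. by rewrite /RSlt /RSle lt_def (inj_eq val_inj). Qed.
HB.instance Definition _ := Num.IntegralDomain_isLeReal.Build RS RS_le0_add RS_le0_mul RS_le0_anti RS_sub_ge0 RS_le0_total RS_normN RS_ge0_norm RS_lt_def.
Lemma RSleE (x y : RS) : (x <= y) = (val x <= val y). Proof. by []. Qed.
Lemma RSltE (x y : RS) : (x < y) = (val x < val y). Proof. by []. Qed.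

Lemma valB (x y : RS) : val (x - y) = val x - val y. Proof. by rewrite rmorphB. Qed.
End RealSub.
Section Num.
Variable F : realFieldType.

Lemma num_tri (a0 a1 a2 a3 b0 b1 b2 b3 c0 c1 c2 c3 P Q : F) :
  0 <= a0 -> 0 <= a1 -> 0 <= a2 -> 0 <= a3 ->
  0 <= b0 -> 0 <= b1 -> 0 <= b2 -> 0 <= b3 ->
  0 <= c0 -> 0 <= c1 -> 0 <= c2 -> 0 <= c3 ->
  c0 <= a0 + b0 -> c1 <= a1 + b1 -> c2 <= a2 + b2 -> c3 <= a3 + b3 ->
  0 <= P -> 0 <= Q -> P ^+ 2 = a0^+2 + a1^+2 + a2^+2 + a3^+2 ->
  Q ^+ 2 = b0^+2 + b1^+2 + b2^+2 + b3^+2 ->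
  c0^+2 + c1^+2 + c2^+2 + c3^+2 <= (P + Q) ^+ 2.
Proof.
move=> *.
have hS : (a0*b0 + a1*b1 + a2*b2 + a3*b3) ^+ 2 <= (P * Q) ^+ 2.
  rewrite exprMn; match goal with H : P ^+ 2 = _ |- _ => rewrite H end;
  match goal with H : Q ^+ 2 = _ |- _ => rewrite H end.
  set L := (a0*b1 - a1*b0)^+2 + (a0*b2 - a2*b0)^+2 + (a0*b3 - a3*b0)^+2
    + (a1*b2 - a2*b1)^+2 + (a1*b3 - a3*b1)^+2 + (a2*b3 - a3*b2)^+2.
  have hL : 0 <= L by rewrite /L; rewrite ?addr_ge0 ?sqr_ge0.
  have -> : (a0^+2 + a1^+2 + a2^+2 + a3^+2) * (b0^+2 + b1^+2 + b2^+2 + b3^+2)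
     = (a0*b0 + a1*b1 + a2*b2 + a3*b3) ^+ 2 + L by rewrite /L; ring.
  by rewrite lerDl.
have hS' : a0*b0 + a1*b1 + a2*b2 + a3*b3 <= P * Q.
  have hPQ : 0 <= P * Q by apply: mulr_ge0.
  move: hS hPQ; generalize (P * Q) (a0*b0 + a1*b1 + a2*b2 + a3*b3) => R S *; nra.
nra.
Qed.

Lemma num_step1 (p0 p1 p2 p3 s T x U d : F) :
  0 <= p0 -> 0 <= p1 -> 0 <= p2 -> 0 <= p3 -> 0 <= s -> 0 <= T -> 0 <= U ->
  0 <= d -> d < 3 / 100 ->
  p0^+2 + p1^+2 + p2^+2 + p3^+2 <= d^+2 ->
  s <= p0 + p3 -> T <= p0 + p3 -> U < 95/100 -> x = U^+2 ->
  x <= s^+2 + 4 * (p1 * p2) + x^+2 + 2 * x * T ->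
  x <= 5/2 * d^+2.
Proof.
move=> hp0 hp1 hp2 hp3 hs hT hU hd0 hd1 hp hsp hTp hU1 hx hq.
have h1a : s^+2 <= (p0 + p3)^+2 by clear -hs hsp; nra.
have h1b : (p0 + p3)^+2 <= 2 * (p0^+2 + p3^+2) by have := sqr_ge0 (p0 - p3); clear; nra.
have h1c : 4 * (p1 * p2) <= 2 * (p1^+2 + p2^+2) by have := sqr_ge0 (p1 - p2); clear; nra.
have h1 : s^+2 + 4 * (p1 * p2) <= 2 * d^+2 by clear -h1a h1b h1c hp; lra.
have h2a : T^+2 <= (p0 + p3)^+2 by clear -hT hTp; nra.
have h2 : T^+2 <= 2 * d^+2 by clear -h2a h1b hp h1c; nra.
have hd2 : d^+2 < 9/10000 by clear -hd0 hd1; nra.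
have h3 : T <= 425/10000 by clear -h2 hd2 hT; nra.
have hx' : x < 9025/10000 by rewrite hx; clear -hU hU1; nra.
have hx0 : 0 <= x by rewrite hx; clear; nra.
have hq' : x <= 2 * d^+2 + x^+2 + 2 * x * T by clear -hq h1; lra.
case: (lerP x (5/2 * d^+2)) => // hgt.
have hneg : (x - 5/2 * d^+2) * (x - 9025/10000) < 0 by clear -hgt hx'; nra.
clear -hneg hq' h3 hT hd2 hx0 hd0 hgt; nra.
Qed.

Lemma num_step2 (d UA UB T q0 q1 q2 q3 D L N : F) :
  0 <= d -> d < 3 / 100 -> 0 <= UA -> 0 <= UB ->
  UA^+2 <= 5/2 * d^+2 -> UB^+2 <= 5/2 * d^+2 -> 0 <= T -> T <= UA + UB ->
  0 <= q0 -> 0 <= q1 -> 0 <= q2 -> 0 <= q3 ->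
  q0^+2 + q1^+2 + q2^+2 + q3^+2 <= 16 * d^+2 ->
  0 <= D -> 2 * D <= T^+2 + T + (q0 + q3) ->
  D * (1 - D - T) <= q0 * q3 + q1 * q2 ->
  0 <= L -> 1 - T <= L -> 0 <= N ->
  L^+2 * N^+2 <= (q0 + D)^+2 + q1^+2 + q2^+2 + (q3 + D)^+2 ->
  N <= 5 * d.
Proof.
move=> hd0 hd1 hA hB hA2 hB2 hT hTU hq0 hq1 hq2 hq3 hq hD hD2 hDD hL hL1 hN hfin.
have hUA : UA <= 16/10 * d by clear -hA hA2 hd0; nra.
have hUB : UB <= 16/10 * d by clear -hB hB2 hd0; nra.
have hT3 : T <= 32/10 * d by clear -hUA hUB hTU; lra.
have hT' : T <= 96/1000 by clear -hT3 hd1; lra.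
have hQa : (q0 + q3)^+2 <= 2 * (q0^+2 + q3^+2) by have := sqr_ge0 (q0 - q3); clear; nra.
have hQ : (q0 + q3)^+2 <= 32 * d^+2 by clear -hQa hq hq1 hq2; nra.
have hQ' : q0 + q3 <= 5657/1000 * d.
  have hq03 : 0 <= q0 + q3 by lra.
  move: hQ hq03; clear -hd0; generalize (q0 + q3) => Q hQ hQ0; nra.
have hTT : T^+2 <= 96/1000 * (32/10 * d) by clear -hT hT' hT3; nra.
have hD4 : D <= 459/100 * d by clear -hD2 hTT hT3 hQ' hd0; lra.
have hD1 : D <= 138/1000 by clear -hD4 hd1; lra.
have hqa : q0 * q3 + q1 * q2 <= 8 * d^+2.
  have := sqr_ge0 (q0 - q3); have := sqr_ge0 (q1 - q2); clear -hq; nra.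
have hD5 : D * (766/1000) <= 8 * d^+2 by clear -hDD hqa hD hD1 hT'; nra.
have hD3 : D <= 314/1000 * d by clear -hD5 hd0 hd1; nra.
have hL' : 904/1000 <= L by clear -hL1 hT'; lra.
have hR : (q0 + D)^+2 + q1^+2 + q2^+2 + (q3 + D)^+2 <= 1975/100 * d^+2.
  have -> : (q0 + D)^+2 + q1^+2 + q2^+2 + (q3 + D)^+2 =
     (q0^+2 + q1^+2 + q2^+2 + q3^+2) + 2 * D * (q0 + q3) + 2 * D^+2 by ring.
  have h1 : 2 * D * (q0 + q3) <= 2 * (314/1000 * d) * (5657/1000 * d).
    by clear -hD3 hQ' hD hq0 hq3; nra.
  have h2 : D^+2 <= (314/1000 * d)^+2 by clear -hD3 hD; nra.
  clear -h1 h2 hq; nra.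
have hL2 : (904/1000)^+2 <= L^+2 :> F by clear -hL' hL; nra.
have hN2 : (904/1000)^+2 * N^+2 <= L^+2 * N^+2 by apply: ler_wpM2r => //; apply: sqr_ge0.
have hN3 : N^+2 <= 25 * d^+2 by clear -hN2 hfin hR; nra.
clear -hN3 hN hd0; nra.
Qed.
End Num.

Section Transfer.
Context {C : numClosedFieldType}.
Definition rr (x : C) : RS C := insubd 0 x.
Lemma rrK (x : C) : x \is Num.real -> val (rr x) = x.
Proof. by move=> h; rewrite /rr insubdK. Qed.
Lemma rrN (x : C) : val (rr `|x|) = `|x|.
Proof. by rewrite rrK // normr_real. Qed.
End Transfer.

Ltac trs := rewrite ?RSleE ?RSltE /= ?(rmorphD, rmorphB, rmorphM, rmorphXn, rmorphN, rmorph_nat, fmorph_div, rmorph0, rmorph1) ?rrN.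

Section Mat.
Context {C : numClosedFieldType}.
Local Notation i0 := (ord0 : 'I_2).
Local Notation i1 := (ord_max : 'I_2).

Lemma sum2 (f : 'I_2 -> C) : \sum_i f i = f i0 + f i1.
Proof.
rewrite big_ord_recr big_ord1 /=; congr (f _ + _); exact: val_inj.
Qed.

Lemma mulE (A B : 'M[C]_2) i j : (A *m B) i j = A i i0 * B i0 j + A i i1 * B i1 j.
Proof. by rewrite mxE sum2. Qed.

Lemma trE (A : 'M[C]_2) : \tr A = A i0 i0 + A i1 i1.
Proof. by rewrite /mxtrace sum2. Qed.

Definition nsq (M : 'M[C]_2) :=
  `|M i0 i0|^+2 + `|M i0 i1|^+2 + `|M i1 i0|^+2 + `|M i1 i1|^+2.

Lemma hsE (M : 'M[C]_2) : hs_norm M = sqrtC (nsq M).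
Proof.
rewrite /hs_norm trE !mulE /conjT !mxE /nsq -!normCKC.
congr sqrtC; ring.
Qed.

Lemma nsq_ge0 (M : 'M[C]_2) : 0 <= nsq M.
Proof. by rewrite /nsq ?addr_ge0 ?exprn_ge0 ?normr_ge0. Qed.

Lemma hs_ge0 (M : 'M[C]_2) : 0 <= hs_norm M.
Proof. by rewrite hsE sqrtC_ge0 nsq_ge0. Qed.

Lemma hs_sq (M : 'M[C]_2) : hs_norm M ^+ 2 = nsq M.
Proof. by rewrite hsE sqrtCK. Qed.

Lemma hs_real (M : 'M[C]_2) : hs_norm M \is Num.real.
Proof. exact: ger0_real (hs_ge0 M). Qed.

Lemma hs_le (M : 'M[C]_2) y : 0 <= y -> nsq M <= y ^+ 2 -> hs_norm M <= y.
Proof.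
move=> y0 h; rewrite hsE -(sqrCK y0) ler_sqrtC // qualifE /= ?nsq_ge0 ?exprn_ge0 //.
Qed.

Lemma hs_sq_le (M : 'M[C]_2) y : hs_norm M <= y -> nsq M <= y ^+ 2.
Proof.
move=> h; rewrite -hs_sq !expr2; apply: ler_pM => //; exact: hs_ge0.
Qed.
End Mat.
Section Mat2.
Context {C : numClosedFieldType}.
Local Notation i0 := (ord0 : 'I_2).
Local Notation i1 := (ord_max : 'I_2).

Lemma hs_tri (M N : 'M[C]_2) : hs_norm (M + N) <= hs_norm M + hs_norm N.
Proof.
apply: hs_le; first by rewrite addr_ge0 ?hs_ge0.
have := @num_tri (RS C) (rr `|M i0 i0|) (rr `|M i0 i1|) (rr `|M i1 i0|) (rr `|M i1 i1|)
  (rr `|N i0 i0|) (rr `|N i0 i1|) (rr `|N i1 i0|) (rr `|N i1 i1|)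
  (rr `|(M+N) i0 i0|) (rr `|(M+N) i0 i1|) (rr `|(M+N) i1 i0|) (rr `|(M+N) i1 i1|)
  (rr (hs_norm M)) (rr (hs_norm N)).
rewrite !RSleE /= !rrN !rrK ?hs_real //.
have eqP1 := hs_sq M; have eqP2 := hs_sq N.
rewrite /nsq in eqP1 eqP2 *.
rewrite !mxE in eqP1 eqP2 *.
move=> H; apply: H; rewrite ?normr_ge0 ?hs_ge0 ?ler_normD //; apply: val_inj; trs; rewrite ?rrK ?hs_real //.
Qed.

Lemma nsqN (M : 'M[C]_2) : nsq (- M) = nsq M.
Proof. by rewrite /nsq !mxE !normrN. Qed.

Lemma hsN (M : 'M[C]_2) : hs_norm (- M) = hs_norm M.
Proof. by rewrite !hsE nsqN. Qed.

Lemma hs_triB (M N : 'M[C]_2) : hs_norm (M - N) <= hs_norm M + hs_norm N.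
Proof. by rewrite -(hsN N) hs_tri. Qed.

Lemma step1 (M : 'M[C]_2) (d : C) : 0 <= d -> d < 3%:R / 100%:R ->
  hs_norm (M *m M - M) <= d -> `|\tr M - 1%:R| < 95%:R / 100%:R ->
  `|\tr M - 1%:R| ^+ 2 <= 5%:R / 2%:R * d ^+ 2.
Proof.
move=> hd0 hd1 hE hU.
set E := M *m M - M.
have hn := hs_sq_le _ _ hE.
set u := \tr M - 1%:R.
have key : u ^+ 2 = (E i0 i0 - E i1 i1) ^+ 2 + 4%:R * (E i0 i1 * E i1 i0)
   + (u ^+ 2) ^+ 2 - 2%:R * u ^+ 2 * (E i0 i0 + E i1 i1).
  rewrite /u /E trE !mxE !sum2; ring.
have hx : `|u| ^+ 2 <= `|E i0 i0 - E i1 i1| ^+ 2 + 4%:R * (`|E i0 i1| * `|E i1 i0|)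
   + (`|u| ^+ 2) ^+ 2 + 2%:R * `|u| ^+ 2 * `|E i0 i0 + E i1 i1|.
  set a := (E i0 i0 - E i1 i1) ^+ 2; set b := 4%:R * (E i0 i1 * E i1 i0).
  set c := (u ^+ 2) ^+ 2; set f := 2%:R * u ^+ 2 * (E i0 i0 + E i1 i1).
  have f1 : `|u|^+2 <= `|a + b + c| + `|f| by rewrite -normrX key; exact: ler_normB.
  have f2 : `|a + b + c| <= `|a + b| + `|c| by exact: ler_normD.
  have f3 : `|a + b| <= `|a| + `|b| by exact: ler_normD.
  have ea : `|a| = `|E i0 i0 - E i1 i1| ^+ 2 by rewrite normrX.
  have eb : `|b| = 4%:R * (`|E i0 i1| * `|E i1 i0|) by rewrite !normrM normr_nat.
  have ec : `|c| = (`|u| ^+ 2) ^+ 2 by rewrite !normrX.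
  have ef : `|f| = 2%:R * `|u| ^+ 2 * `|E i0 i0 + E i1 i1| by rewrite normrM [`|2%:R * _|]normrM normr_nat normrX.
  rewrite ea eb in f3; rewrite ec in f2; rewrite ef in f1.
  apply: le_trans f1 _; rewrite lerD2r; apply: le_trans f2 _; rewrite lerD2r //.
have dr : d \is Num.real by exact: ger0_real.
have := @num_step1 (RS C) (rr `|E i0 i0|) (rr `|E i0 i1|) (rr `|E i1 i0|) (rr `|E i1 i1|)
  (rr `|E i0 i0 - E i1 i1|) (rr `|E i0 i0 + E i1 i1|) ((rr `|u|)^+2) (rr `|u|) (rr d).
rewrite /nsq in hn.
trs; rewrite ?rrK //.
apply; rewrite ?normr_ge0 ?ler_normD ?ler_normB //.
Qed.
End Mat2.

Lemma num_step2' (F : realFieldType) (d UA UB T q0 q1 q2 q3 D Y L N y0 y1 y2 y3 z0 z3 : F) :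
  0 <= d -> d < 3 / 100 -> 0 <= UA -> 0 <= UB ->
  UA^+2 <= 5/2 * d^+2 -> UB^+2 <= 5/2 * d^+2 -> 0 <= T -> T <= UA + UB ->
  0 <= q0 -> 0 <= q1 -> 0 <= q2 -> 0 <= q3 ->
  q0^+2 + q1^+2 + q2^+2 + q3^+2 <= (4 * d)^+2 ->
  0 <= D -> 2 * D <= T^+2 + T + (q0 + q3) ->
  D * Y <= q0 * q3 + q1 * q2 -> 1 <= Y + D + T ->
  0 <= L -> 1 <= L + T -> 0 <= N ->
  0 <= z0 -> 0 <= z3 ->
  N ^+ 2 = y0^+2 + y1^+2 + y2^+2 + y3^+2 ->
  L * y0 = z0 -> L * y1 = q1 -> L * y2 = q2 -> L * y3 = z3 ->
  z0 <= q0 + D -> z3 <= q3 + D ->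
  N <= 5 * d.
Proof.
move=> hd0 hd1 hA hB hA2 hB2 hT hTU hq0 hq1 hq2 hq3 hq hD hD2 hDY hY hL hL1 hN hz0 hz3 hN2 e0 e1 e2 e3 hz0' hz3'.
apply: (@num_step2 F d UA UB T q0 q1 q2 q3 D L N hd0 hd1 hA hB hA2 hB2 hT hTU hq0 hq1 hq2 hq3) => //.
- by move: hq; rewrite exprMn; have -> : (4:F)^+2 = 16 by rewrite expr2; lra.
- by clear -hDY hY hD; nra.
- by clear -hL1; lra.
- have -> : L^+2 * N^+2 = z0^+2 + q1^+2 + q2^+2 + z3^+2.
    by rewrite hN2 -e0 -e1 -e2 -e3; ring.
  have h0 : z0^+2 <= (q0 + D)^+2 by clear -hz0 hz0'; nra.
  have h3 : z3^+2 <= (q3 + D)^+2 by clear -hz3 hz3'; nra.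
  clear -h0 h3; lra.
Qed.

Lemma hs4 (C : numClosedFieldType) (E F G H : 'M[C]_2) d :
  hs_norm E <= d -> hs_norm F <= d -> hs_norm G <= d -> hs_norm H <= d ->
  hs_norm (E + F - G - H) <= 4%:R * d.
Proof.
move=> hE hF hG hH.
have -> : 4%:R * d = ((d + d) + d) + d by ring.
apply: le_trans (hs_triB _ _) _; apply: lerD => //.
apply: le_trans (hs_triB _ _) _; apply: lerD => //.
apply: le_trans (hs_tri _ _) _; exact: lerD.
Qed.

Local Notation i0 := (ord0 : 'I_2).
Local Notation i1 := (ord_max : 'I_2).

Theorem lemmal (C : numClosedFieldType) (S : Type) (op : S -> S -> S)
  (theta : S -> 'M[C]_2) (delta : C)
  (hS : is_semilattice op)
  (hd0 : 0 <= delta) (hd1 : delta < 3%:R / 100%:R)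
  (htheta : forall x y : S,
      hs_norm (theta x *m theta y - theta (op x y)) <= delta)
  (e f : S) (he : in_Sk theta 1 e) (hf : in_Sk theta 1 f)
  (hef : op e f = f) :
  hs_norm (theta e - theta f) <= 5%:R * delta.
Proof.
case: hS => _ [hC hI].
set A := theta e; set B := theta f.
have hAA : hs_norm (A *m A - A) <= delta by have := htheta e e; rewrite hI.
have hBB : hs_norm (B *m B - B) <= delta by have := htheta f f; rewrite hI.
have hAB : hs_norm (A *m B - B) <= delta by have := htheta e f; rewrite hef.
have hBA : hs_norm (B *m A - B) <= delta by have := htheta f e; rewrite hC hef.
have sA := step1 _ _ hd0 hd1 hAA he.
have sB := step1 _ _ hd0 hd1 hBB hf.
set X := A - B.
set K := X *m X - X.
have eK : K = (A *m A - A) + (B *m B - B) - (A *m B - B) - (B *m A - B).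
  apply/matrixP => i j; rewrite /K /X !mxE !sum2 !mxE; ring.
have hK : hs_norm K <= 4%:R * delta by rewrite eK; exact: hs4.
have hKn := hs_sq_le _ _ hK.
set t := \tr X.
set dd := X i0 i0 * X i1 i1 - X i0 i1 * X i1 i0.
have I1 : K i0 i0 + K i1 i1 = t^+2 - t - 2%:R * dd.
  by rewrite /K /t /dd /X trE !mxE !sum2 !mxE; ring.
have I2 : K i0 i0 * K i1 i1 - K i0 i1 * K i1 i0 = dd * (dd - t + 1).
  by rewrite /K /t /dd /X trE !mxE !sum2 !mxE; ring.
have I3a : (t - 1) * X i0 i0 = K i0 i0 + dd by rewrite /K /t /dd /X trE !mxE !sum2 !mxE; ring.
have I3b : (t - 1) * X i0 i1 = K i0 i1 by rewrite /K /t /dd /X trE !mxE !sum2 !mxE; ring.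
have I3c : (t - 1) * X i1 i0 = K i1 i0 by rewrite /K /t /dd /X trE !mxE !sum2 !mxE; ring.
have I3d : (t - 1) * X i1 i1 = K i1 i1 + dd by rewrite /K /t /dd /X trE !mxE !sum2 !mxE; ring.
have et : t = (\tr A - 1%:R) - (\tr B - 1%:R) by rewrite /t /X !trE !mxE; ring.
have nT : `|t| <= `|\tr A - 1%:R| + `|\tr B - 1%:R| by rewrite et ler_normB.
have nD : 2%:R * `|dd| <= (`|t|^+2 + `|t|) + (`|K i0 i0| + `|K i1 i1|).
  have e2 : 2%:R * dd = (t^+2 - t) - (K i0 i0 + K i1 i1) by rewrite I1; ring.
  have f1 : `|2%:R * dd| <= `|t^+2 - t| + `|K i0 i0 + K i1 i1| by rewrite e2 ler_normB.
  have f2 : `|t^+2 - t| <= `|t|^+2 + `|t| by rewrite -normrX ler_normB.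
  rewrite normrM normr_nat in f1.
  apply: le_trans f1 _; apply: lerD => //; exact: ler_normD.
have nDY : `|dd| * `|dd - t + 1| <= `|K i0 i0| * `|K i1 i1| + `|K i0 i1| * `|K i1 i0|.
  by rewrite -normrM -I2 -!normrM ler_normB.
have nY : 1 <= `|dd - t + 1| + `|dd| + `|t|.
  have e1 : (1 : C) = (dd - t + 1) - dd + t by ring.
  have h : `|(dd - t + 1) - dd + t| <= `|dd - t + 1| + `|dd| + `|t|.
    by apply: le_trans (ler_normD _ _) _; rewrite lerD2r; exact: ler_normB.
  by rewrite -e1 normr1 in h.
have nL : 1 <= `|t - 1| + `|t|.
  have := lerB_dist 1 t; rewrite normr1 distrC lerBlDr; exact.
have nz0 : `|K i0 i0 + dd| <= `|K i0 i0| + `|dd| by exact: ler_normD.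
have nz3 : `|K i1 i1 + dd| <= `|K i1 i1| + `|dd| by exact: ler_normD.
have hN := hs_sq X.
rewrite /nsq in hN hKn.
have dr : delta \is Num.real by exact: ger0_real.
have := @num_step2' (RS C) (rr delta) (rr `|\tr A - 1%:R|) (rr `|\tr B - 1%:R|) (rr `|t|)
  (rr `|K i0 i0|) (rr `|K i0 i1|) (rr `|K i1 i0|) (rr `|K i1 i1|) (rr `|dd|)
  (rr `|dd - t + 1|) (rr `|t - 1|) (rr (hs_norm X))
  (rr `|X i0 i0|) (rr `|X i0 i1|) (rr `|X i1 i0|) (rr `|X i1 i1|)
  (rr `|K i0 i0 + dd|) (rr `|K i1 i1 + dd|).
trs; rewrite ?rrK ?hs_real //.
apply; rewrite ?normr_ge0 ?hs_ge0 //.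
all: try (apply: val_inj; trs; rewrite ?rrK ?hs_real // -normrM).
all: by rewrite ?I3a ?I3b ?I3c ?I3d.
Qed.
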